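(* Let $f=f(u,v)$ be a generalized timelike minimal surface with real Weierstrass data $(g_1,g_2,\hat{\omega}_1du,\hat{\omega}_2dv)$ and let $p=(0,0)$ be a non-degenerate singular point with $\operatorname{rank}(df_p)=1$ and $\hat\omega_2(p)=0$ at which $f$ is not a front. Put \[ a=\frac{(\hat{\omega}_2)_v}{\hat{\omega}_1}\left(\frac{g_1+g_2}{1+g_1^2}\right)^2(p),\qquad b=\frac{(\hat{\omega}_2)_{vv}}{2\hat{\omega}_1}\left(\frac{g_1+g_2}{1+g_1^2}\right)^2(p), \] $\tilde\eta=(av+bv^2)\partial_u+\partial_v$, $\xi=\partial_u$, and $C=\dfrac{(\hat{\omega}_2)_{vv}}{(\hat{\omega}_2)_v}(p)$. Then $\tilde\eta$ is a null vector field along the singular curve $v=0$ (i.e.\ $df(\tilde\eta)=0$ there), \[ \langle \xi f,\tilde\eta^2f\rangle_E(p)=\langle \xi f,\tilde\eta^3f\rangle_E(p)=0,\qquad \tilde\eta^3f(p)=C\,\tilde\eta^2f(p). \]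
   Context: $\mathbb{L}^3$ is $\mathbb{R}^3$ with the Lorentzian metric $\langle\,,\rangle=-dt^2+dx^2+dy^2$; $\langle\,,\rangle_E$ is the Euclidean inner product of $\mathbb{R}^3$. A generalized timelike minimal surface is a non-constant smooth map $f\colon\Sigma\to\mathbb{L}^3$ from a 2-manifold which is an immersion on an open dense subset and such that near each point there are local coordinates $(u,v)$ with $\langle f_u,f_u\rangle=\langle f_v,f_v\rangle=0$ and $f_{uv}=0$. In such coordinates $f(u,v)=\tfrac12\int_{u_0}^u(-1-g_1^2,1-g_1^2,2g_1)\hat{\omega}_1du+\tfrac12\int_{v_0}^v(1+g_2^2,1-g_2^2,-2g_2)\hat{\omega}_2dv+f(u_0,v_0)$, with $g_1,\hat\omega_1$ functions of $u$ and $g_2,\hat\omega_2$ functions of $v$ (real Weierstrass data). Standing assumption: $g_1,g_2$ take finite real values at every singular point. Such $f$ is a frontal with unit normal $n=(g_1+g_2,-g_1+g_2,1+g_1g_2)/\sqrt{(1-g_1g_2)^2+2(g_1+g_2)^2}$; $f$ is a front at $p$ if $(f,n)$ is an immersion at $p$. With $\lambda=\det(f_u,f_v,n)$, a singular point is non-degenerate if $d\lambda_p\neq0$. For a vector field $\tilde\eta$, $\tilde\eta^kf$ is the $k$-fold directional derivative $\tilde\eta\cdots\tilde\eta f$. *)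

(* Defs.v *)
From Stdlib Require Import Reals.
From Coquelicot Require Import Coquelicot.
Open Scope R_scope.

Definition V3 := (R * R * R)%type.
Definition c1 (x : V3) : R := fst (fst x).
Definition c2 (x : V3) : R := snd (fst x).
Definition c3 (x : V3) : R := snd x.
Definition vzero : V3 := (0, 0, 0).
Definition vadd (x y : V3) : V3 := (c1 x + c1 y, c2 x + c2 y, c3 x + c3 y).
Definition vscal (a : R) (x : V3) : V3 := (a * c1 x, a * c2 x, a * c3 x).

Definition dotE (x y : V3) : R := c1 x * c1 y + c2 x * c2 y + c3 x * c3 y.
Definition cross (x y : V3) : V3 :=
  (c2 x * c3 y - c3 x * c2 y, c3 x * c1 y - c1 x * c3 y, c1 x * c2 y - c2 x * c1 y).
Definition det3 (x y z : V3) : R := dotE (cross x y) z.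

Definition smooth1 (h : R -> R) : Prop := forall (n : nat) (x : R), ex_derive (Derive_n h n) x.

Definition pu (F : R -> R -> R) (u v : R) : R := Derive (fun x => F x v) u.
Definition pv (F : R -> R -> R) (u v : R) : R := Derive (fun y => F u y) v.

Definition vpu (F : R -> R -> V3) (u v : R) : V3 :=
  (pu (fun a b => c1 (F a b)) u v, pu (fun a b => c2 (F a b)) u v, pu (fun a b => c3 (F a b)) u v).
Definition vpv (F : R -> R -> V3) (u v : R) : V3 :=
  (pv (fun a b => c1 (F a b)) u v, pv (fun a b => c2 (F a b)) u v, pv (fun a b => c3 (F a b)) u v).

Definition vfact (X1 X2 : R -> R -> R) (F : R -> R -> V3) : R -> R -> V3 :=
  fun u v => vadd (vscal (X1 u v) (vpu F u v)) (vscal (X2 u v) (vpv F u v)).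
Definition viter (X1 X2 : R -> R -> R) (k : nat) (F : R -> R -> V3) : R -> R -> V3 :=
  Nat.iter k (vfact X1 X2) F.

(** The surface given by real Weierstrass data (g1, w1 du, g2, w2 dv),
    base point (u0,v0) and f(u0,v0) = f0. *)
Definition WF (g1 w1 g2 w2 : R -> R) (u0 v0 : R) (f0 : V3) : R -> R -> V3 :=
  fun u v =>
  ( /2 * RInt (fun s => (-1 - g1 s ^ 2) * w1 s) u0 u
      + /2 * RInt (fun t => (1 + g2 t ^ 2) * w2 t) v0 v + c1 f0,
    /2 * RInt (fun s => (1 - g1 s ^ 2) * w1 s) u0 u
      + /2 * RInt (fun t => (1 - g2 t ^ 2) * w2 t) v0 v + c2 f0,
    /2 * RInt (fun s => 2 * g1 s * w1 s) u0 u
      + /2 * RInt (fun t => -2 * g2 t * w2 t) v0 v + c3 f0 ).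

Definition nvec (g1 g2 : R -> R) : R -> R -> V3 :=
  fun u v => vscal (/ sqrt ((1 - g1 u * g2 v) ^ 2 + 2 * (g1 u + g2 v) ^ 2))
                   (g1 u + g2 v, - g1 u + g2 v, 1 + g1 u * g2 v).

Definition lam (F : R -> R -> V3) (n : R -> R -> V3) : R -> R -> R :=
  fun u v => det3 (vpu F u v) (vpv F u v) (n u v).

Definition lin_dep2 (x y : V3) : Prop :=
  exists al be : R, (al <> 0 \/ be <> 0) /\ vadd (vscal al x) (vscal be y) = vzero.

Definition immersion_at (F : R -> R -> V3) (u v : R) : Prop :=
  ~ lin_dep2 (vpu F u v) (vpv F u v).

(** f is an immersion on a dense (automatically open) subset of the coordinate plane. *)
Definition immersion_dense (F : R -> R -> V3) : Prop :=
  forall u v eps, 0 < eps ->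
    exists u' v', Rabs (u' - u) < eps /\ Rabs (v' - v) < eps /\ immersion_at F u' v'.

Definition rank_df_one (F : R -> R -> V3) (u v : R) : Prop :=
  lin_dep2 (vpu F u v) (vpv F u v) /\ (vpu F u v <> vzero \/ vpv F u v <> vzero).

Definition nondegenerate (F n : R -> R -> V3) (u v : R) : Prop :=
  pu (lam F n) u v <> 0 \/ pv (lam F n) u v <> 0.

(** f is a front at p iff (f,n) : R^2 -> R^6 is an immersion at p;
    i.e. the columns (f_u,n_u), (f_v,n_v) of R^6 are linearly independent. *)
Definition front_at (F n : R -> R -> V3) (u v : R) : Prop :=
  ~ (exists al be : R, (al <> 0 \/ be <> 0) /\
       vadd (vscal al (vpu F u v)) (vscal be (vpv F u v)) = vzero /\
       vadd (vscal al (vpu n u v)) (vscal be (vpv n u v)) = vzero).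

(* Main.v *)
Require Import Defs.
From Stdlib Require Import Reals Lra Psatz FunctionalExtensionality Classical.
From Coquelicot Require Import Coquelicot.
Open Scope R_scope.
Lemma exd0 h : smooth1 h -> forall x, ex_derive h x.
Proof. intros H x. exact (H 0%nat x). Qed.
Lemma exd1 h : smooth1 h -> forall x, ex_derive (Derive h) x.
Proof. intros H x. exact (H 1%nat x). Qed.
Lemma cont_s h : smooth1 h -> forall x, continuous h x.
Proof. intros H x. exact (@ex_derive_continuous R_AbsRing R_NormedModule h x (exd0 h H x)). Qed.
Lemma RInt_der (h : R->R) a: (forall x, continuous h x) -> forall x, is_derive (fun y => RInt h a y) x (h x).
Proof. intros Hc x. apply (is_derive_RInt h (fun y => RInt h a y) a x); auto.
  apply filter_forall. intros y. simpl. apply (RInt_correct h a y), (ex_RInt_continuous (V:=R_CompleteNormedModule) h). intros; auto. Qed.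
Lemma DerRInt1 h a K K' x: (forall x, continuous h x) -> Derive (fun y => /2 * RInt h a y + K + K') x = /2 * h x.
Proof. intros Hc. apply is_derive_unique. auto_derive; [|ring].
  split; [|split; auto].
  - apply (ex_RInt_continuous (V:=R_CompleteNormedModule) h). intros; auto.
  - apply filter_forall. intros y. apply continuity_pt_filterlim. apply Hc. Qed.
Lemma DerRInt2 h a K K' x: (forall x, continuous h x) -> Derive (fun y => K + /2 * RInt h a y + K') x = /2 * h x.
Proof. intros Hc. apply is_derive_unique. auto_derive; [|ring].
  split; [|split; auto].
  - apply (ex_RInt_continuous (V:=R_CompleteNormedModule) h). intros; auto.
  - apply filter_forall. intros y. apply continuity_pt_filterlim. apply Hc. Qed.

Lemma D_aff (c : R) (P : R -> R) (d u : R): ex_derive P u -> Derive (fun x => c * P x + d) u = c * Derive P u.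
Proof. intros H. apply is_derive_unique. auto_derive. auto. rewrite Rmult_1_l. reflexivity. Qed.

Lemma S_pos x t : 0 < (1 - x*t)^2 + 2*(x+t)^2.
Proof. destruct (Req_dec (x+t) 0) as [H|H].
  - assert (t = -x) by lra. subst t. nra.
  - assert (0 < (x+t)^2) by (apply pow2_gt_0; auto). nra. Qed.

Ltac cont_tac := intros ?; apply (@ex_derive_continuous R_AbsRing R_NormedModule); auto_derive; repeat split; auto.
Lemma triple_eq (a1 a2 a3 b1 b2 b3 : R) : a1 = b1 -> a2 = b2 -> a3 = b3 -> ((a1, a2, a3) : V3) = (b1, b2, b3).
Proof. intros -> -> ->. reflexivity. Qed.
Lemma S_pos' x t : 0 < (1 + - (x * t)) * ((1 + - (x * t)) * 1) + 2 * ((x + t) * ((x + t) * 1)).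
Proof. pose proof (S_pos x t). nra. Qed.
Lemma S_sqrt x t : sqrt ((1 + - (x * t)) * ((1 + - (x * t)) * 1) + 2 * ((x + t) * ((x + t) * 1))) <> 0.
Proof. apply Rgt_not_eq, sqrt_lt_R0, S_pos'. Qed.
Ltac side_tac := repeat split; auto; try apply S_pos'; try apply S_sqrt.
Ltac etas g1 w1 g2 w2 := try change (fun x : R => g1 x) with g1; try change (fun x : R => w1 x) with w1;
  try change (fun x : R => g2 x) with g2; try change (fun x : R => w2 x) with w2;
  try change (fun x : R => Derive g2 x) with (Derive g2); try change (fun x : R => Derive w2 x) with (Derive w2).
Lemma alg_lemma Rp r0 x t G: r0 <> 0 -> Rp*(x+t) + r0*G = 0 -> Rp*(-x+t) + r0*G = 0 -> Rp*(1+x*t) + r0*(x*G) = 0 -> G = 0.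
Proof. intros H0 e1 e2 e3. assert (Rp * x = 0) by nra.
  apply Rmult_integral in H. destruct H as [H|H].
  - subst Rp. rewrite Rmult_0_l, Rplus_0_l in e1. apply Rmult_integral in e1. tauto.
  - subst x. assert (Rp = 0) by nra. subst Rp. rewrite Rmult_0_l, Rplus_0_l in e1. apply Rmult_integral in e1. tauto.
Qed.
Lemma deriv_eq (f : R -> R) x l : is_derive f x l -> forall c d, c + 1 * l = d -> c + 1 * Derive f x = d.
Proof. intros H c d E. rewrite (is_derive_unique f x l H). exact E. Qed.

Theorem lemma4p5 (g1 w1 g2 w2 : R -> R) (u0 v0 : R) (f0 : V3) :
  smooth1 g1 -> smooth1 w1 -> smooth1 g2 -> smooth1 w2 ->
  immersion_dense (WF g1 w1 g2 w2 u0 v0 f0) ->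
  ~ immersion_at (WF g1 w1 g2 w2 u0 v0 f0) 0 0 ->
  nondegenerate (WF g1 w1 g2 w2 u0 v0 f0) (nvec g1 g2) 0 0 ->
  rank_df_one (WF g1 w1 g2 w2 u0 v0 f0) 0 0 ->
  w2 0 = 0 ->
  ~ front_at (WF g1 w1 g2 w2 u0 v0 f0) (nvec g1 g2) 0 0 ->
  let f := WF g1 w1 g2 w2 u0 v0 f0 in
  let k := ((g1 0 + g2 0) / (1 + g1 0 ^ 2)) ^ 2 in
  let a := Derive w2 0 / w1 0 * k in
  let b := Derive_n w2 2 0 / (2 * w1 0) * k in
  let C := Derive_n w2 2 0 / Derive w2 0 in
  let X1 := fun (u v : R) => a * v + b * v ^ 2 in
  let X2 := fun (u v : R) => 1 in
  let xi_f := vpu f in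
  (forall u : R, viter X1 X2 1 f u 0 = vzero) /\
  dotE (xi_f 0 0) (viter X1 X2 2 f 0 0) = 0 /\
  dotE (xi_f 0 0) (viter X1 X2 3 f 0 0) = 0 /\
  viter X1 X2 3 f 0 0 = vscal C (viter X1 X2 2 f 0 0).
Proof.
  intros Hg1 Hw1 Hg2 Hw2 _ _ Hnd Hrank Hw20 Hnf f k a b C X1 X2 xi_f.
  subst f X1 X2 xi_f.
  pose proof (exd0 g1 Hg1) as Dg1. pose proof (exd0 w1 Hw1) as Dw1.
  pose proof (exd0 g2 Hg2) as Dg2. pose proof (exd0 w2 Hw2) as Dw2.
  pose proof (exd1 g2 Hg2) as DDg2. pose proof (exd1 w2 Hw2) as DDw2.
  set (F := WF g1 w1 g2 w2 u0 v0 f0) in *.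
  assert (Hfu : vpu F = fun u v => (/2 * ((-1 - g1 u ^ 2) * w1 u), /2 * ((1 - g1 u ^ 2) * w1 u), /2 * (2 * g1 u * w1 u))).
  { apply functional_extensionality; intro u; apply functional_extensionality; intro v.
    unfold vpu, pu, F, WF. unfold Defs.c1, c2, c3; cbn [fst snd]. f_equal; [f_equal|];
    (erewrite DerRInt1; [reflexivity| cont_tac]). }
  assert (Hfv : vpv F = fun u v => (/2 * ((1 + g2 v ^ 2) * w2 v), /2 * ((1 - g2 v ^ 2) * w2 v), /2 * (-2 * g2 v * w2 v))).
  { apply functional_extensionality; intro u; apply functional_extensionality; intro v.
    unfold vpv, pv, F, WF. unfold Defs.c1, c2, c3; cbn [fst snd]. f_equal; [f_equal|];
    (erewrite DerRInt2; [reflexivity| cont_tac]). }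
  assert (Hw10 : w1 0 <> 0).
  { intro H0. destruct Hrank as [_ [Hu|Hv]]; [apply Hu|apply Hv]; rewrite ?Hfu, ?Hfv; cbv beta;
    rewrite ?H0, ?Hw20; unfold vzero; apply triple_eq; ring. }
  assert (HW2 : Derive w2 0 <> 0).
  { intro HW. destruct Hnd as [Hl|Hl]; apply Hl; unfold lam, pu, pv; rewrite Hfu, Hfv; cbv beta.
    - transitivity (Derive (fun _ : R => 0) 0).
      + apply Derive_ext. intro x. unfold det3, cross, dotE, Defs.c1, c2, c3; cbn [fst snd].
        rewrite Hw20; ring.
      + apply Derive_const.
    - apply is_derive_unique. unfold det3, cross, dotE, nvec, vscal, Defs.c1, c2, c3; cbn [fst snd].
      auto_derive; [side_tac|]. etas g1 w1 g2 w2. rewrite HW, Hw20. ring. }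
  assert (HG2 : Derive g2 0 = 0).
  { apply NNPP in Hnf. destruct Hnf as [al [be [Hab [E1 E2]]]].
    rewrite Hfu, Hfv in E1. cbv beta in E1. rewrite Hw20 in E1.
    unfold vadd, vscal, vzero, Defs.c1, c2, c3 in E1; cbn [fst snd] in E1.
    injection E1 as E11 E12 E13.
    assert (Hal0 : al * ((1 + g1 0 ^ 2) * w1 0) = 0) by nra.
    assert (Hal : al = 0).
    { apply Rmult_integral in Hal0. destruct Hal0 as [H|H]; auto.
      apply Rmult_integral in H. destruct H as [H|H]; [|contradiction].
      pose proof (pow2_ge_0 (g1 0)). lra. }
    subst al. destruct Hab as [Hab|Hbe]; [lra|].
    unfold vadd, vscal, vzero, vpu, vpv, Defs.c1, c2, c3 in E2; cbn [fst snd] in E2.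
    injection E2 as E21 E22 E23.
    rewrite Rmult_0_l, Rplus_0_l in E21, E22, E23.
    apply Rmult_integral in E21. apply Rmult_integral in E22. apply Rmult_integral in E23.
    destruct E21 as [E21|E21]; [lra|]. destruct E22 as [E22|E22]; [lra|]. destruct E23 as [E23|E23]; [lra|].
    unfold pv, nvec, vscal, Defs.c1, c2, c3 in E21, E22, E23; cbn [fst snd] in E21, E22, E23.
    erewrite Derive_mult in E21, E22, E23 by (auto_derive; side_tac).
    assert (D1 : Derive (fun x => g1 0 + g2 x) 0 = Derive g2 0)
      by (apply is_derive_unique; auto_derive; [auto| etas g1 w1 g2 w2; ring]).
    assert (D2 : Derive (fun x => - g1 0 + g2 x) 0 = Derive g2 0)
      by (apply is_derive_unique; auto_derive; [auto| etas g1 w1 g2 w2; ring]).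
    assert (D3 : Derive (fun x => 1 + g1 0 * g2 x) 0 = g1 0 * Derive g2 0)
      by (apply is_derive_unique; auto_derive; [auto| etas g1 w1 g2 w2; ring]).
    rewrite D1 in E21. rewrite D2 in E22. rewrite D3 in E23.
    eapply alg_lemma; [ | exact E21 | exact E22 | exact E23].
    apply Rinv_neq_0_compat, Rgt_not_eq, sqrt_lt_R0. pose proof (S_pos (g1 0) (g2 0)). nra. }
  set (X1 := fun u v : R => a * v + b * v ^ 2).
  set (X2 := fun u v : R => 1).
  assert (Hpu1 : vpu (vfact X1 X2 F) = fun u v =>
     (X1 u v * Derive (fun x => /2 * ((-1 - g1 x ^ 2) * w1 x)) u,
      X1 u v * Derive (fun x => /2 * ((1 - g1 x ^ 2) * w1 x)) u,
      X1 u v * Derive (fun x => /2 * (2 * g1 x * w1 x)) u)).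
  { apply functional_extensionality; intro u; apply functional_extensionality; intro v.
    unfold vpu, pu, vfact. rewrite Hfu, Hfv. unfold X1, X2, vadd, vscal, Defs.c1, c2, c3; cbn [fst snd].
    apply triple_eq; (erewrite D_aff; [reflexivity| auto_derive; side_tac]). }
  assert (Hpv1 : vpv (vfact X1 X2 F) = fun u v =>
     ((a + 2 * b * v) * (/2 * ((-1 - g1 u ^ 2) * w1 u)) + /2 * (2 * g2 v * Derive g2 v * w2 v + (1 + g2 v ^ 2) * Derive w2 v),
      (a + 2 * b * v) * (/2 * ((1 - g1 u ^ 2) * w1 u)) + /2 * (-2 * g2 v * Derive g2 v * w2 v + (1 - g2 v ^ 2) * Derive w2 v),
      (a + 2 * b * v) * (/2 * (2 * g1 u * w1 u)) + /2 * (-2 * Derive g2 v * w2 v - 2 * g2 v * Derive w2 v))).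
  { apply functional_extensionality; intro u; apply functional_extensionality; intro v.
    unfold vpv, pv, vfact. rewrite Hfu, Hfv. unfold X1, X2, vadd, vscal, Defs.c1, c2, c3; cbn [fst snd].
    apply triple_eq; (apply is_derive_unique; auto_derive; [side_tac | etas g1 w1 g2 w2; ring]). }
  change (viter X1 X2 3 F) with (vfact X1 X2 (vfact X1 X2 (vfact X1 X2 F))).
  change (viter X1 X2 2 F) with (vfact X1 X2 (vfact X1 X2 F)).
  change (viter X1 X2 1 F) with (vfact X1 X2 F).
  change (Derive_n w2 2 0) with (Derive (Derive w2) 0) in b, C.
  assert (V2 : vfact X1 X2 (vfact X1 X2 F) 0 0 =
     (a * (/2 * ((-1 - g1 0 ^ 2) * w1 0)) + /2 * ((1 + g2 0 ^ 2) * Derive w2 0),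
      a * (/2 * ((1 - g1 0 ^ 2) * w1 0)) + /2 * ((1 - g2 0 ^ 2) * Derive w2 0),
      a * (/2 * (2 * g1 0 * w1 0)) + /2 * (- 2 * g2 0 * Derive w2 0))).
  { unfold vfact at 1. rewrite Hpu1, Hpv1. unfold X1, X2, vadd, vscal, Defs.c1, c2, c3; cbn [fst snd].
    rewrite HG2, Hw20. apply triple_eq; ring. }
  assert (V3 : vfact X1 X2 (vfact X1 X2 (vfact X1 X2 F)) 0 0 =
     (2 * b * (/2 * ((-1 - g1 0 ^ 2) * w1 0)) + /2 * ((1 + g2 0 ^ 2) * Derive (Derive w2) 0),
      2 * b * (/2 * ((1 - g1 0 ^ 2) * w1 0)) + /2 * ((1 - g2 0 ^ 2) * Derive (Derive w2) 0),
      2 * b * (/2 * (2 * g1 0 * w1 0)) + /2 * (- 2 * g2 0 * Derive (Derive w2) 0))).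
  { assert (E2eq : vfact X1 X2 (vfact X1 X2 F) = fun u v => vadd (vscal (X1 u v) (vpu (vfact X1 X2 F) u v)) (vscal (X2 u v) (vpv (vfact X1 X2 F) u v))) by reflexivity.
    unfold vfact at 1. unfold vpv at 1, pv. rewrite E2eq. rewrite Hpu1, Hpv1.
    unfold X1, X2, vadd, vscal, Defs.c1, c2, c3; cbn [fst snd].
    apply triple_eq; (eapply deriv_eq; [auto_derive; [side_tac|reflexivity] | ]);
      etas g1 w1 g2 w2; rewrite ?HG2, ?Hw20; ring. }
  assert (Hg1n : 1 + g1 0 ^ 2 <> 0) by (pose proof (pow2_ge_0 (g1 0)); lra).
  split.
  { intro u. unfold vfact. rewrite Hfu, Hfv. unfold X1, X2, vadd, vscal, vzero, Defs.c1, c2, c3; cbn [fst snd].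
    rewrite Hw20. apply triple_eq; ring. }
  rewrite V2, V3, Hfu. cbv beta. unfold dotE, vscal, Defs.c1, c2, c3; cbn [fst snd].
  split; [|split].
  - unfold a, k. field. auto.
  - unfold b, k. field. auto.
  - apply triple_eq; unfold C, a, b, k; field; auto.
Qed.
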